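(* Let $n,x$ be integers with $1<x<n$, so that $G=C_{2n}(x,1,n)$ is a $5$-regular circulant graph. If $n\equiv x\equiv 0 \pmod 3$ and $x>\tfrac{2n}{3}$, then $G$ is word-representable.
   Context: Two distinct letters $x,y$ alternate in a word $w$ if, after deleting all other letters from $w$, the resulting word is of the form $xyxy\cdots$ or $yxyx\cdots$ (of even or odd length). A graph $G=(V,E)$ is word-representable if there is a word $w$ over the alphabet $V$, containing every letter of $V$ at least once, such that for all distinct $x,y\in V$, $xy\in E$ if and only if $x$ and $y$ alternate in $w$. For an integer $m$ and a set $R$ of positive integers each at most $m/2$, the circulant graph $C_m(R)$ has vertex set $\{0,1,\dots,m-1\}$, with $i$ and $j$ adjacent iff $\min(|i-j|,\,m-|i-j|)\in R$. $C_{2n}(x,1,n)$ denotes the circulant graph on $2n$ vertices with jump set $\{1,x,n\}$; it is $5$-regular exactly when $1<x<n$. *)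

(* Defs.v *)
From mathcomp Require Import all_boot.
Set Implicit Arguments. Unset Strict Implicit. Unset Printing Implicit Defensive.

Definition alt_word (T : Type) (a b : T) (k : nat) : seq T :=
  [seq if odd i then b else a | i <- iota 0 k].

Definition alternate (T : eqType) (w : seq T) (x y : T) : Prop :=
  let s := [seq z <- w | (z == x) || (z == y)] in
  s = alt_word x y (size s) \/ s = alt_word y x (size s).

Definition word_representable (V : finType) (adj : rel V) : Prop :=
  exists w : seq V,
    (forall v : V, v \in w) /\
    (forall u v : V, u != v -> (adj u v <-> alternate w u v)).

Definition cdist (m i j : nat) : nat :=
  let d := if i <= j then j - i else i - j in minn d (m - d).

Definition circulant_adj (m : nat) (R : pred nat) : rel 'I_m :=
  fun i j => (i != j) && R (cdist m i j).
Arguments circulant_adj m R : clear implicits.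

Definition C2n_x1n (n x : nat) : rel 'I_(2 * n)%N :=
  circulant_adj (2 * n)%N (fun d => [|| d == 1, d == x | d == n]).
Arguments C2n_x1n n x : clear implicits.

(* Main.v *)
Require Import Defs.
From mathcomp Require Import all_boot.
From mathcomp Require Import zify.
Set Implicit Arguments. Unset Strict Implicit. Unset Printing Implicit Defensive.

Lemma alt_wordS (T : Type) (a b : T) k : alt_word a b k.+1 = a :: alt_word b a k.
Proof.
rewrite /alt_word /= -[1]/(1 + 0) iotaDl -map_comp; congr (_ :: _).
by apply: eq_map => i /=; rewrite add0n; case: (odd i).
Qed.

Lemma alt_path (T : eqType) (a b : T) k : a != b -> path (fun x y => x != y) a (alt_word b a k).
Proof.
elim: k a b => [|k IH] a b hab //.
rewrite alt_wordS /= hab /=; apply: IH; by rewrite eq_sym.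
Qed.

Lemma alt_sorted (T : eqType) (a b : T) k : a != b -> sorted (fun x y => x != y) (alt_word a b k).
Proof. case: k => [|k] hab //; rewrite alt_wordS /=; exact: alt_path. Qed.

Lemma flatten4 (A T : Type) (u v : T) (g : A -> seq T) (l : seq A) :
  (forall a, g a = [:: u; v; u; v]) -> flatten (map g l) = alt_word u v (4 * size l).
Proof.
move=> hg; elim: l => [|a l IH] //=.
by rewrite hg IH mulnS !alt_wordS.
Qed.

Lemma sorted_flatten (A T : Type) (r : rel T) (g : A -> seq T) (l : seq A) :
  sorted r (flatten (map g l)) -> forall a, List.In a l -> sorted r (g a).
Proof.
elim: l => [|b l IH] //= hs a [<-|hin].
  by case: (cat_sorted2 hs).
by apply: IH => //; case: (cat_sorted2 hs).
Qed.


Lemma alt_cat (T : Type) (u v : T) k j : alt_word u v (k.*2) ++ alt_word u v j = alt_word u v (k.*2 + j).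
Proof. by elim: k => [|k IH] //; rewrite doubleS !addSn !alt_wordS !cat_cons IH. Qed.

Lemma size_alt (T : Type) (u v : T) k : size (alt_word u v k) = k.
Proof. by rewrite /alt_word size_map size_iota. Qed.

Lemma flattenK (A T : Type) (u v : T) (g : A -> seq T) (l : seq A) m :
  (forall a, g a = alt_word u v (m.*2)) -> flatten (map g l) = alt_word u v ((m * size l).*2).
Proof.
move=> hg; elim: l => [|a l IH]; first by rewrite muln0.
by rewrite map_cons [flatten _]/= hg IH alt_cat /= mulnS doubleD.
Qed.

Lemma sorted_flat (A : eqType) (T : Type) (r : rel T) (g : A -> seq T) (l : seq A) :
  sorted r (flatten (map g l)) -> forall a, a \in l -> sorted r (g a).
Proof.
elim: l => [|b l IH] //= hs a; rewrite inE => /predU1P [->|hin].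
  by case: (cat_sorted2 hs).
by apply: IH => //; case: (cat_sorted2 hs).
Qed.

Lemma filter_flat (A T : Type) (P : pred T) (g : A -> seq T) (l : seq A) :
  filter P (flatten (map g l)) = flatten (map (fun a => filter P (g a)) l).
Proof. by rewrite filter_flatten -map_comp. Qed.

Lemma alternate_sym (T : eqType) (w : seq T) u v : alternate w u v -> alternate w v u.
Proof.
rewrite /alternate.
have -> : [seq z <- w | (z == v) || (z == u)] = [seq z <- w | (z == u) || (z == v)].
  by apply: eq_filter => z; rewrite orbC.
by case; [right|left].
Qed.

Section General.
Variables (V : finType) (adj : rel V) (col : V -> nat).
Hypothesis adj_sym : forall u v, adj u v = adj v u.
Hypothesis col_ok : forall u v, adj u v -> col u != col v.
Hypothesis col_lt : forall v, col v < 3.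

Definition incl c (X : seq V) z := (col z == c) && (z \notin X).
Definition E c (X : seq V) := [seq z <- enum V | incl c X z].
Definition mk (c k : nat) (first : seq V) := if c == k then first else [::].
Definition Pall := E 0 [::] ++ E 1 [::] ++ E 2 [::].
Definition Lg p q first := E 0 [:: p; q] ++ mk 0 (col p) first ++ E 1 [:: p; q] ++ mk 1 (col p) first
   ++ E 2 [:: p; q] ++ mk 2 (col p) first.
Definition SS p q := E 0 [:: q] ++ E 1 [:: q] ++ E 2 [:: q] ++ [:: p; q] ++ E 0 [:: p] ++ E 1 [:: p] ++ E 2 [:: p].
Definition gadget p q :=
  if [&& p != q, ~~ adj p q & col p <= col q] then
    (if col q == col p + 2 then SS p q else Lg p q [:: p; q] ++ Lg p q [:: q; p])
  else Pall ++ Pall.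
Definition word := flatten [seq flatten [seq gadget p q | q <- enum V] | p <- enum V].

Lemma filterE u v c X : ~~ (incl c X u && incl c X v) ->
  [seq z <- E c X | (z == u) || (z == v)] =
  (if incl c X u then [:: u] else [::]) ++ (if incl c X v then [:: v] else [::]).
Proof.
move=> h; rewrite /E -filter_predI.
have key : forall a : pred V, (forall z, ((z == u) || (z == v)) && incl c X z = a z) ->
   [seq z <- enum V | predI (fun z => (z == u) || (z == v)) (incl c X) z] = [seq z <- enum V | a z].
  by move=> a ha; apply: eq_filter => z; rewrite /= ha.
case hu: (incl c X u); case hv: (incl c X v); rewrite hu hv in h => //=.
- rewrite -(filter_pred1_uniq (enum_uniq V) (mem_enum V u)); apply: key => z /=.
  case: (eqVneq z u) => [->|nu]; first by rewrite ?eqxx ?hu ?hv ?andbF ?orbT ?andbT.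
  case: (eqVneq z v) => [->|nv]; first by rewrite ?eqxx ?hu ?hv ?andbF ?orbT ?andbT.
  by [].
- rewrite -(filter_pred1_uniq (enum_uniq V) (mem_enum V v)); apply: key => z /=.
  case: (eqVneq z v) => [->|nv]; first by rewrite ?eqxx ?hu ?hv ?andbF ?orbT ?andbT.
  case: (eqVneq z u) => [->|nu]; first by rewrite ?eqxx ?hu ?hv ?andbF ?orbT ?andbT.
  by [].
- rewrite -(filter_pred0 (enum V)); apply: key => z /=.
  case: (eqVneq z v) => [->|nv]; first by rewrite ?eqxx ?hu ?hv ?andbF ?orbT ?andbT.
  case: (eqVneq z u) => [->|nu]; first by rewrite ?eqxx ?hu ?hv ?andbF ?orbT ?andbT.
  by [].
Qed.

Lemma incl_neq u v c X : col u != col v -> ~~ (incl c X u && incl c X v).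
Proof.
rewrite /incl => h; apply/negP => /andP [/andP [/eqP hu _] /andP [/eqP hv _]].
by rewrite hu hv eqxx in h.
Qed.


Ltac kill_neq :=
  repeat match goal with
  | H : is_true (?a != ?b) |- context [?a == ?b] => rewrite (negbTE H)
  | H : is_true (?a != ?b) |- context [?b == ?a] => rewrite (eq_sym b a) (negbTE H)
  end.

Ltac col_cases :=
  repeat match goal with
  | |- context [col ?a] =>
      let h := fresh "hc" in
      have h := col_lt a; move: h; generalize (col a);
      let k := fresh "k" in intro k; case: k => [|[|[|k]]] //= h
  end.

Ltac kill_refl :=
  match goal with H : is_true (?a != ?a) |- _ => by rewrite eqxx in H end.

Lemma SS_edge p q u v : adj u v -> col u < col v -> ~~ adj p q -> col q == col p + 2 ->
  [seq z <- SS p q | (z == u) || (z == v)] = [:: u; v; u; v].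
Proof.
move=> huv cuv nadj h2.
have ne : col u != col v by rewrite neq_ltn cuv.
have nuv : u != v by apply: contraTneq cuv => ->; rewrite ltnn.
rewrite /SS !filter_cat !(filterE (incl_neq _ _ ne)) /incl !inE /=.
case: (eqVneq u p) => [?|?]; case: (eqVneq u q) => [?|?];
case: (eqVneq v p) => [?|?]; case: (eqVneq v q) => [?|?]; subst; try kill_refl;
try (by case/negP: nadj; rewrite // adj_sym);
kill_neq; rewrite ?eqxx /=; move: cuv h2; col_cases.
Qed.

Lemma Lg_edge p q u v first : p != q -> adj u v -> col u < col v -> ~~ adj p q -> col p <= col q -> col q != col p + 2 ->
  (first = [:: p; q] \/ first = [:: q; p]) ->
  [seq z <- Lg p q first | (z == u) || (z == v)] = [:: u; v].
Proof.
move=> npq huv cuv nadj cpq h2 hf.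
have ne : col u != col v by rewrite neq_ltn cuv.
have nuv : u != v by apply: contraTneq cuv => ->; rewrite ltnn.
case: hf => ->;
rewrite /Lg !filter_cat !(filterE (incl_neq _ _ ne)) /incl /mk !inE /=;
case: (eqVneq u p) => [?|?]; case: (eqVneq u q) => [?|?];
case: (eqVneq v p) => [?|?]; case: (eqVneq v q) => [?|?]; subst; try kill_refl;
try (by case/negP: nadj; rewrite // adj_sym);
kill_neq; rewrite ?eqxx /=; move: cuv h2 cpq; col_cases;
rewrite ?eqxx; kill_neq; rewrite /= ?eqxx; kill_neq; by [].
Qed.

Lemma Pall_edge u v : col u < col v ->
  [seq z <- Pall | (z == u) || (z == v)] = [:: u; v].
Proof.
move=> cuv.
have ne : col u != col v by rewrite neq_ltn cuv.
rewrite /Pall !filter_cat !(filterE (incl_neq _ _ ne)) /incl /=.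
move: cuv; col_cases.
Qed.

Lemma gadget_edge p q u v : adj u v -> col u < col v ->
  [seq z <- gadget p q | (z == u) || (z == v)] = [:: u; v; u; v].
Proof.
move=> huv cuv; rewrite /gadget; case: ifP => [/and3P [npq nadj cpq]|_].
- case: ifP => h2; first exact: SS_edge.
  rewrite filter_cat !(Lg_edge npq huv cuv nadj cpq) ?h2 //; by [left|right].
- by rewrite filter_cat Pall_edge.
Qed.

Lemma gadget_nonedge p q : p != q -> ~~ adj p q -> col p <= col q ->
  ~~ sorted (fun x y => x != y) [seq z <- gadget p q | (z == p) || (z == q)].
Proof.
move=> npq nadj cpq; rewrite /gadget npq nadj cpq /=.
case: ifP => h2.
- have ne : col p != col q by rewrite (eqP h2) -{1}[col p]addn0 eqn_add2l.
  rewrite /SS !filter_cat !(filterE (incl_neq _ _ ne)) /incl !inE /=.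
  rewrite eqxx (eq_sym q p) (negbTE npq) /=.
  move: h2 cpq; col_cases; rewrite /= ?eqxx /= ?eqxx //.
- have hx : forall c, ~~ (incl c [:: p; q] p && incl c [:: p; q] q).
    by move=> c; rewrite /incl !inE eqxx /= !andbF.
  rewrite /Lg !filter_cat !(filterE (hx _)) /incl /mk !inE /= !eqxx /=.
  rewrite (eq_sym q p) (negbTE npq) /=.
  move: h2 cpq; col_cases; rewrite /= ?eqxx ?(eq_sym q p) ?(negbTE npq) /= ?eqxx ?(eq_sym q p) ?(negbTE npq) /= ?eqxx //.
Qed.

Theorem col3_wr : word_representable adj.
Proof.
exists word; split.
- move=> v; apply/flatten_mapP; exists v; first exact: mem_enum.
  apply/flatten_mapP; exists v; first exact: mem_enum.
  have memE : forall c X, (v \in E c X) = incl c X v by move=> c X; rewrite /E mem_filter mem_enum andbT.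
  rewrite /gadget eqxx andFb /Pall !mem_cat !memE /incl !in_nil !andbT.
  by move: (col_lt v); case: (col v) => [|[|[|]]].
- have key : forall u v, adj u v -> col u < col v ->
      [seq z <- word | (z == u) || (z == v)] = alt_word u v ((#|V| * #|V|).*2.*2).
    move=> u v huv cuv; rewrite /word filter_flat (@flattenK _ _ u v _ _ (#|V|.*2)).
      by rewrite -cardE -doubleMl.
    move=> p; rewrite filter_flat (@flattenK _ _ u v _ _ 2).
      by rewrite -cardE mul2n.
    by move=> q; rewrite gadget_edge.
  move=> u v nuv; split.
  + move=> huv; have := col_ok huv; rewrite neq_ltn => /orP [cuv|cvu].
    * by left; rewrite /alternate key // size_alt.
    * apply: alternate_sym; left; rewrite key ?size_alt //; by rewrite adj_sym.
  + move=> halt; apply/negPn/negP => nadj.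
    wlog cuv : u v nuv halt nadj / col u <= col v.
      move=> H; case: (leqP (col u) (col v)) => c; first exact: (H u v).
      apply: (H v u); [by rewrite eq_sym | exact: alternate_sym | by rewrite adj_sym | exact: ltnW].
    have hs : sorted (fun x y => x != y) [seq z <- word | (z == u) || (z == v)].
      by case: halt => ->; apply: alt_sorted; rewrite // eq_sym.
    move: hs; rewrite /word filter_flat => /sorted_flat /(_ u (mem_enum _ u)).
    rewrite filter_flat => /sorted_flat /(_ v (mem_enum _ v)).
    by apply/negP; apply: gadget_nonedge.
Qed.
End General.
Lemma cdist_sym m i j : cdist m i j = cdist m j i.
Proof. rewrite /cdist; case: (leqP i j); case: (leqP j i); lia. Qed.

Definition colr (x i : nat) := (i + (if i < x then 0 else if i < 2 * x then 1 else 2)) %% 3.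

Lemma colr_ok (n x i j : nat) : 1 < x < n -> n %% 3 = 0 -> x %% 3 = 0 -> 2 * n < 3 * x ->
  i < 2 * n -> j < 2 * n -> i != j ->
  [|| cdist (2 * n) i j == 1, cdist (2 * n) i j == x | cdist (2 * n) i j == n] ->
  colr x i != colr x j.
Proof.
move=> /andP [h1 h2] hn hx h3 hi hj hij hd; rewrite /colr.
move: hd; rewrite /cdist.
case: (leqP i j) => hle; case: ifP => c1; case: ifP => c2; try case: ifP => c3; try case: ifP => c4;
 move=> hd; apply/eqP; lia.
Qed.

Theorem theorem22 (n x : nat) :
  1 < x < n ->
  n %% 3 = 0 -> x %% 3 = 0 ->
  2 * n < 3 * x ->
  word_representable (C2n_x1n n x).
Proof.
move=> hxn hn hx h3.
apply: (@col3_wr _ _ (fun i : 'I_(2 * n) => colr x i)).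
- by move=> u v; rewrite /C2n_x1n /circulant_adj eq_sym cdist_sym.
- move=> u v /andP [huv hd]; exact: (colr_ok hxn hn hx h3 (ltn_ord u) (ltn_ord v) huv hd).
- by move=> v; rewrite /colr ltn_pmod.
Qed.
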